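(* For every $n\in\mathbb{N}$ and $t\in\mathbb{C}$, \[ t^n=\sum_{k=0}^nS_D[n,k]\,(t)^{D}_{k,q}+n(t-1)^{n-1}-[n]_q\,q^{n-1}(t)^{D}_{n-1,q}. \]
   Context: $[k]_q=1+\dots+q^{k-1}$, $[0]_q=0$. For fixed $n$, the $q$-falling factorial of type D is $(t)^D_{0,q}=1$, $(t)^D_{k,q}=(t-[1]_q)(t-[3]_q)\cdots(t-[2k-1]_q)$ for $1\le k<n$, and $(t)^D_{n,q}=(t-[1]_q)(t-[3]_q)\cdots(t-[2n-3]_q)(t-[n-1]_q)$. For $S\subset\mathbb{Z}\setminus\{0\}$, $\overline{S}=\{-i:i\in S\}$, a standard signed partition (SSP) of $S$ with $k$ blocks is a sequence $(S_1,\dots,S_k)$ of disjoint nonempty subsets of $S\cup\overline{S}$ with $\{S_1,\dots,S_k,\overline{S_1},\dots,\overline{S_k}\}$ a partition of $S\cup\overline{S}$ and $\min|S_1|\le\dots\le\min|S_k|$ ($|S_i|=\{|j|:j\in S_i\}$). A PSSP of $S$ is an SSP of a (possibly empty) subset of $S$. $B(S,k)$, $B_{\subseteq}(S,k)$ are the sets of SSPs, PSSPs of $S$ with $k$ blocks, and $D_{\subseteq}([n],k)=B_{\subseteq}([n],k)\setminus\bigcup_{i=1}^nB([n]\setminus\{i\},k)$. For $\pi=(S_1,\dots,S_k)$, $\mathrm{pos}(\pi)=\#\{x\in\bigcup_iS_i:x>0\}$, $m(\pi)=2\sum_{i=1}^ki\cdot\#S_i-\mathrm{pos}(\pi)$,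 and $S_D[n,k]=\frac{1}{q^{k^2}[2]_q^k}\sum_{\pi\in D_{\subseteq}([n],k)}q^{m(\pi)}$. For $n=0$ the terms $n(t-1)^{n-1}$ and $[n]_qq^{n-1}(t)^D_{n-1,q}$ are $0$. *)

(* Defs.v *)
From mathcomp Require Import all_boot all_order all_algebra.
Set Implicit Arguments.
Unset Strict Implicit.
Unset Printing Implicit Defensive.
Import GRing.Theory.

(* Signed elements of [n]: (j, b) with j : 'I_n encodes the integer
   (j+1) if b = true and -(j+1) if b = false. *)
Definition sgnel (n : nat) : finType := ('I_n * bool)%type.

Section TypeD.
Variable n : nat.

Definition sbar (A : {set sgnel n}) : {set sgnel n} :=
  [set x : sgnel n | (x.1, ~~ x.2) \in A].

(* min |A| (as a natural number j+1); n.+1 for the empty set (never used). *)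
Definition minabs (A : {set sgnel n}) : nat :=
  \big[minn/n.+1]_(x in A) (x.1).+1.

(* (S_1,...,S_k) (with S_{i+1} = P i) is a standard signed partition of T *)
Definition is_SSP (k : nat) (T : {set 'I_n}) (P : {ffun 'I_k -> {set sgnel n}}) : bool :=
  [&& [forall i, P i != set0],
      [forall i, forall j, (i != j) ==> [disjoint P i & P j]],
      [forall i, forall j, [disjoint P i & sbar (P j)]],
      (\bigcup_i (P i :|: sbar (P i))) == [set x : sgnel n | x.1 \in T] &
      [forall i : 'I_k, forall j : 'I_k, (i <= j)%N ==> (minabs (P i) <= minabs (P j))%N]].

Definition is_PSSP (k : nat) (P : {ffun 'I_k -> {set sgnel n}}) : bool :=
  [exists T : {set 'I_n}, is_SSP T P].

Definition is_Dsub (k : nat) (P : {ffun 'I_k -> {set sgnel n}}) : bool :=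
  is_PSSP P && ~~ [exists i : 'I_n, is_SSP (setT :\ i) P].

Definition pos (k : nat) (P : {ffun 'I_k -> {set sgnel n}}) : nat :=
  #|[set x in \bigcup_i P i | x.2]|.

(* m(pi) = 2 sum_{i=1}^k i #S_i - pos(pi)  (always >= 0) *)
Definition mstat (k : nat) (P : {ffun 'I_k -> {set sgnel n}}) : nat :=
  (2 * \sum_(i < k) (i.+1 * #|P i|) - pos P)%N.

End TypeD.

Section QStuff.
Variable R : fieldType.
Local Open Scope ring_scope.

Definition qint (q : R) (k : nat) : R := \sum_(i < k) q ^+ i.

Definition SD (n k : nat) (q : R) : R :=
  (q ^+ (k * k) * qint q 2 ^+ k)^-1 *
  \sum_(P : {ffun 'I_k -> {set sgnel n}} | is_Dsub P) q ^+ mstat P.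

(* (t)^D_{k,q} for fixed n (only meaningful for k <= n) *)
Definition fallD (n k : nat) (q t : R) : R :=
  if k == 0%N then 1
  else if (k < n)%N then \prod_(i < k) (t - qint q (2 * i).+1)
  else (\prod_(i < n.-1) (t - qint q (2 * i).+1)) * (t - qint q n.-1).

End QStuff.

(* Main.v *)
Require Import Defs.
From mathcomp Require Import all_boot all_order all_algebra.
From Stdlib Require Import Setoid.
From mathcomp Require Import zify ring.
Import GRing.Theory.

Definition code := option (nat * bool).
Definition isb (i : nat) (y : code) : bool := if y is Some (b, _) then b == i else false.
Definition bnd (k : nat) (y : code) : bool := if y is Some (b, _) then b < k else true.
Definition fo (s : seq code) i := find (isb i) s.
Definition Vsem k (s : seq code) : Prop :=
  [/\ all (bnd k) s, (forall i, i < k -> fo s i < size s) &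
      (forall i, i.+1 < k -> fo s i < fo s i.+1)].

Definition stp (st : option nat) (y : code) : option nat :=
  match st, y with
  | Some m, None => Some m
  | Some m, Some (b, _) => if b < m then Some m else if b == m then Some m.+1 else None
  | None, _ => None
  end.
Definition st (s : seq code) := foldl stp (Some 0) s.

Lemma fo_rcons s x i : fo (rcons s x) i =
  if has (isb i) s then fo s i else if isb i x then size s else (size s).+1.
Proof.
rewrite /fo -cats1 find_cat; case: ifP => // _ /=.
by case: ifP => _; rewrite ?addn0 ?addn1.
Qed.

Lemma fo_mono k s : (forall i, i.+1 < k -> fo s i < fo s i.+1) ->
  forall i j, i < j -> j < k -> fo s i < fo s j.
Proof.
move=> H i j; elim: j => // j IH.
rewrite ltnS leq_eqVlt => /orP [/eqP -> | lij] jk.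
  by apply: H.
apply: ltn_trans (IH lij (ltnW jk)) (H _ jk).
Qed.

Lemma has_bnd_isb b s : all (bnd b) s -> has (isb b) s = false.
Proof.
move=> /allP A; apply/hasP => [[y /A]]; case: y => [[c sg]|] //= H /eqP E.
by move: H; rewrite E ltnn.
Qed.

Lemma V_rcons_None k s : Vsem k (rcons s None) <-> Vsem k s.
Proof.
split.
- case; rewrite all_rcons /= size_rcons => A B C; split => //.
  + move=> i ik; have := B i ik; rewrite fo_rcons /=.
    by case: ifP => [|_]; [rewrite -has_find | rewrite ltnn].
  + move=> i ik; have := C i ik; have := B i (ltnW ik); have := B _ ik.
    rewrite !fo_rcons /=; do 2 case: ifP => //; by rewrite ?ltnn.
- case=> A B C; split; first by rewrite all_rcons A.
  + move=> i ik; rewrite fo_rcons size_rcons has_find B //.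
    by apply: ltn_trans (B i ik) _.
  + move=> i ik; rewrite !fo_rcons !has_find !B ?(ltnW ik) //. exact: C.
Qed.

Lemma V_rcons_Some k s b sg : Vsem k (rcons s (Some (b, sg))) <->
  (b < k /\ Vsem k s) \/ (b.+1 = k /\ Vsem b s).
Proof.
split.
- case; rewrite all_rcons /= size_rcons => /andP [bk A] B C.
  have Cm := @fo_mono _ _ C.
  case hb: (has (isb b) s).
  + left; split => //.
    have Hh : forall i, i < k -> has (isb i) s.
      move=> i ik; case hi: (has (isb i) s) => //.
      have := B i ik; rewrite fo_rcons hi /=.
      case: eqP => [E|_]; first by move: hb; rewrite E hi.
      by rewrite ltnn.
    split => //.
    * by move=> i ik; rewrite -has_find Hh.
    * move=> i ik; have := C i ik; rewrite !fo_rcons !Hh // ltnW //.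
  + right.
    have Hh : forall i, i < k -> i != b -> has (isb i) s.
      move=> i ik ib; case hi: (has (isb i) s) => //.
      have := B i ik; rewrite fo_rcons hi /= eq_sym (negbTE ib).
      by rewrite ltnn.
    have kb : b.+1 = k.
      apply/eqP; rewrite eqn_leq bk andTb leqNgt; apply/negP => lt.
      have := Cm _ _ (ltnSn b) lt; have := B _ lt.
      rewrite !fo_rcons hb /= eqxx Hh // ?neq_ltn ?ltnSn ?orbT //.
      move=> H1 H2; by rewrite ltnS leqNgt H2 in H1.
    split => //; split.
    * apply/allP => y ys; have := allP A y ys; case: y ys => [[c sg']|] //= ys ck.
      rewrite ltn_neqAle -ltnS kb ck andbT; apply/negP => /eqP E.
      by move: hb; move/negbT/hasPn => /(_ _ ys) /=; rewrite E eqxx.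
    * move=> i ib; rewrite -has_find Hh ?neq_ltn ?ib //; rewrite -kb; exact: ltnW.
    * move=> i ib; have ik : i.+1 < k by rewrite -kb; apply: ltnW.
      have := C i ik.
      rewrite !fo_rcons !Hh ?neq_ltn ?ib ?(ltnW ib) ?(ltnW ik) //.
- case=> [[bk [A B C]] | [<- [A B C]]].
  + have Hh : forall i, i < k -> has (isb i) s by move=> i ik; rewrite has_find B.
    split; first by rewrite all_rcons /= bk A.
    * move=> i ik; rewrite fo_rcons Hh // size_rcons; exact: ltn_trans (B i ik) _.
    * move=> i ik; rewrite !fo_rcons !Hh ?(ltnW ik) //; exact: C.
  + have Hh : forall i, i < b -> has (isb i) s by move=> i ik; rewrite has_find B.
    have hb := @has_bnd_isb _ _ A.
    split.
    * rewrite all_rcons /= ltnSn /=; apply: sub_all A => -[[c sg']|] //= cb.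
      exact: ltn_trans cb _.
    * move=> i; rewrite ltnS leq_eqVlt size_rcons => /orP [/eqP -> | ib].
        by rewrite fo_rcons hb /= eqxx.
      rewrite fo_rcons Hh //; exact: ltn_trans (B i ib) _.
    * move=> i; rewrite ltnS leq_eqVlt => /orP [/eqP E | ib].
        have ib : i < b by rewrite -E.
        by rewrite !fo_rcons E hb Hh //= eqxx B.
      rewrite !fo_rcons !Hh ?(ltnW ib) //; exact: C.
Qed.

Lemma Vsem_nil k : Vsem k [::] <-> k = 0.
Proof.
split; last by move->; split.
by case: k => // k [_ B _]; have := B 0 (ltn0Sn k).
Qed.

Lemma st_V s : forall k, st s = Some k <-> Vsem k s.
Proof.
elim/last_ind: s => [|s x IH] k.
  by rewrite Vsem_nil /st /=; split => [[]|->].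
rewrite /st foldl_rcons -/(st s).
case: x => [[b sg]|].
- rewrite V_rcons_Some -!IH.
  case: (st s) => [m|] /=; last by split => // -[[_ ]|[_ ]].
  split.
  + case: ifP => bm; first by case=> <-; left.
    case: eqP => [<- [<-]|//]; by right.
  + case=> [[bk [->]]|[<- [->]]]; first by rewrite bk.
    by rewrite ltnn eqxx.
- rewrite V_rcons_None -IH; by case: (st s).
Qed.

Lemma st_bound s k : st s = Some k -> k + count_mem None s <= size s.
Proof.
elim/last_ind: s k => [|s x IH] k; first by rewrite /st /= => -[<-].
rewrite /st foldl_rcons -/(st s) -cats1 count_cat size_cat /= addn0.
case: (st s) IH => [m|] IH //.
move: (IH m erefl) => H.
case: x => [[b sg]|] /=.
- rewrite addn0; case: ifP => _; first by case=> <-; rewrite (leq_trans H) // leq_addr.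
  case: eqP => // _ [<-]; rewrite addSn addn1 ltnS.
  exact: H.
- by move=> [<-]; rewrite addnA leq_add2r.
Qed.

Definition alph N : seq code :=
  None :: flatten [seq [:: Some (b, true); Some (b, false)] | b <- iota 0 N].
Fixpoint allseq N m : seq (seq code) :=
  if m is m'.+1 then [seq rcons s x | s <- allseq N m', x <- alph N] else [:: [::]].

Lemma mem_alph N y : (y \in alph N) = bnd N y.
Proof.
case: y => [[b sg]|]; last by rewrite in_cons.
rewrite in_cons /=.
apply/flatten_mapP/idP => [[c]|bN].
  rewrite mem_iota add0n => /andP [_ cN].
  by rewrite !inE => /orP [] /eqP [-> _].
by exists b; rewrite ?mem_iota ?add0n ?bN // !inE; case: sg; rewrite eqxx ?orbT.
Qed.

Lemma uniq_alph N : uniq (alph N).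
Proof.
rewrite cons_uniq; apply/andP; split.
  by apply/flatten_mapP => -[c _]; rewrite !inE.
elim: N => [|N IH] //.
rewrite -addn1 iotaD map_cat flatten_cat cat_uniq IH /= andbT.
rewrite add0n orbF; apply/andP; split; last by rewrite inE; apply/eqP => -[].
apply/norP; split;
  apply/flatten_mapP => -[c]; rewrite mem_iota add0n => /andP [_ cN];
  rewrite !inE => /orP [] /eqP [E]; by rewrite E ltnn in cN.
Qed.

Lemma mem_allseq N m s : (s \in allseq N m) = (size s == m) && all (bnd N) s.
Proof.
elim: m s => [|m IH] s.
  by rewrite /= in_cons in_nil orbF; case: s.
apply/allpairsP/idP => [[[s' x] /= [s'in xin ->]]|].
  rewrite size_rcons all_rcons -mem_alph xin /= eqSS.
  by rewrite IH in s'in.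
elim/last_ind: s => [|s x _]; first by [].
rewrite size_rcons all_rcons eqSS -mem_alph => /and3P [sm xin A].
by exists (s, x); rewrite IH sm A.
Qed.

Lemma uniq_allseq N m : uniq (allseq N m).
Proof.
elim: m => [|m IH] //.
apply: allpairs_uniq => //; first exact: uniq_alph.
move=> [s x] [s' x'] _ _ /= /eqP; rewrite eqseq_rcons => /andP [/eqP -> /eqP ->] //.
Qed.

Lemma bigmin_le (T : eqType) (r : seq T) (Pr : pred T) (F : T -> nat) m x0 :
  x0 \in r -> Pr x0 -> \big[minn/m]_(x <- r | Pr x) F x <= F x0.
Proof.
elim: r => // y r IH; rewrite in_cons big_cons => /orP [/eqP <- | xr] Px.
  by rewrite Px geq_minl.
case: ifP => _; last exact: IH.
by rewrite (leq_trans (geq_minr _ _)) // IH.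
Qed.
Arguments bigmin_le {T r Pr F m x0}.

Definition ey (y : code) : nat := if y is Some (b, sg) then (2 * b).+1 + ~~ sg else 0.
Definition wexp (s : seq code) := \sum_(y <- s) ey y.

Lemma eq_Some (c c' : nat) (b b' : bool) :
  (Some (c, b) == Some (c', b')) = (c == c') && (b == b').
Proof. by apply/eqP/andP => [[-> ->]|[/eqP -> /eqP ->]]. Qed.

Section Bij.
Variables n k : nat.
Notation PT := {ffun 'I_k -> {set sgnel n}}.

Definition toP (s : seq code) : PT :=
  [ffun i => [set x : sgnel n | nth None s x.1 == Some (val i, x.2)]].
Definition cd (P : PT) (j : 'I_n) : code :=
  if [pick ib : 'I_k * bool | (j, ib.2) \in P ib.1] is Some ib
  then Some (val ib.1, ib.2) else None.
Definition dec (P : PT) : seq code := [seq cd P j | j <- enum 'I_n].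
Definition rel (P : PT) s := forall (i : 'I_k) (j : 'I_n) b,
  ((j, b) \in P i) = (nth None s j == Some (val i, b)).

Lemma rel_toP s : rel (toP s) s.
Proof. by move=> i j b; rewrite ffunE inE. Qed.

Lemma rel_uniq P P' s : rel P s -> rel P' s -> P = P'.
Proof.
move=> H H'; apply/ffunP => i; apply/setP => -[j b].
by rewrite H H'.
Qed.

Lemma size_dec P : size (dec P) = n.
Proof. by rewrite size_map size_enum_ord. Qed.

Lemma nth_dec P (j : 'I_n) : nth None (dec P) j = cd P j.
Proof.
by rewrite (nth_map j) ?size_enum_ord // nth_ord_enum.
Qed.

Lemma bnd_dec P : all (bnd k) (dec P).
Proof.
apply/allP => y /mapP [j _ ->]; rewrite /cd.
by case: pickP => // -[i b] _ /=.
Qed.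

Lemma dec_rel P s : rel P s -> size s = n -> all (bnd k) s -> dec P = s.
Proof.
move=> H sz A; apply: (@eq_from_nth _ None); first by rewrite size_dec sz.
move=> j; rewrite size_dec => jn.
have -> : j = nat_of_ord (Ordinal jn) by [].
rewrite nth_dec /cd; case: pickP => [[i b] /= |].
  by rewrite H => /eqP ->.
move=> Hn.
case E: (nth None s (Ordinal jn)) => [[c sg]|] //.
have ck : c < k.
  have := allP A _ (mem_nth None (_ : Ordinal jn < size s)); rewrite E; apply.
  by rewrite sz.
by have := Hn (Ordinal ck, sg); rewrite /= H E eqxx.
Qed.

Lemma SSP_rel T P : is_SSP T P -> rel P (dec P).
Proof.
case/and5P => _ /forallP D1 /forallP D2 _ _ i j b.
rewrite nth_dec /cd; case: pickP => [[i' b'] /= Hin|Hn].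
- apply/idP/eqP => [Hib|[/val_inj <- <-] //].
  have bb : b' = b.
    apply/eqP; apply/negP => nb.
    have := disjointFr (forallP (D2 i) i') Hib; rewrite inE /=.
    have -> : ~~ b = b' by case: b b' nb {Hib Hin} => -[].
    by rewrite Hin.
  subst b'; congr (Some (_, _)).
  case: (eqVneq i' i) => [->//|ne].
  have := forallP (D1 i') i; rewrite ne /= => /disjointFr /(_ Hin) H.
  by rewrite Hib in H.
- apply/negbTE/negP => Hib.
  by have := Hn (i, b); rewrite /= Hib.
Qed.

Lemma PSSP_rel P : is_PSSP P -> rel P (dec P).
Proof. by case/existsP => T; apply: SSP_rel. Qed.

Definition Tset (s : seq code) := [set j : 'I_n | nth None s j != None].

Section G.
Variables (P : PT) (s : seq code).
Let Hyps := [/\ rel P s, size s = n & all (bnd k) s].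

Lemma G_nonempty (H : rel P s) (sz : size s = n) (i : 'I_k) :
  (P i != set0) = (fo s i < size s).
Proof.
apply/set0Pn/idP => [[[j b]]|Hf].
  rewrite H => /eqP E; rewrite -has_find; apply/(has_nthP None).
  by exists j; rewrite ?sz //= E /= eqxx.
have fn : fo s i < n by rewrite -sz.
have := nth_find None (_ : has (isb i) s); rewrite has_find => /(_ Hf).
case E: (nth None s (fo s i)) => [[c sg]|] //= /eqP ci.
exists (Ordinal fn, sg); by rewrite H /= E ci.
Qed.

Lemma G_minabs (H : rel P s) (sz : size s = n) (i : 'I_k) :
  fo s i < size s -> minabs (P i) = (fo s i).+1.
Proof.
move=> Hf; have fn : fo s i < n by rewrite -sz.
have := nth_find None (_ : has (isb i) s); rewrite has_find => /(_ Hf).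
case E: (nth None s (fo s i)) => [[c sg]|] //= /eqP ci.
have x0in : ((Ordinal fn, sg) : sgnel n) \in P i by rewrite H /= E ci.
apply/eqP; rewrite eqn_leq; apply/andP; split.
  by rewrite /minabs (bigmin_le (mem_index_enum _) x0in).
rewrite /minabs; apply: (big_ind (fun m => (fo s i).+1 <= m)).
- by rewrite ltnS ltnW.
- by move=> a b' Ha Hb; rewrite leq_min Ha Hb.
- move=> [j b] /=; rewrite H => /eqP Ej; rewrite ltnS leqNgt; apply/negP => lt.
  by have := before_find None lt; rewrite Ej /= eqxx.
Qed.

Lemma G_U (H : rel P s) (sz : size s = n) (A : all (bnd k) s) (x : sgnel n) :
  (x \in \bigcup_i (P i :|: sbar (P i))) = (nth None s x.1 != None).
Proof.
case: x => j b /=.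
apply/bigcupP/idP => [[i _]|].
  by rewrite !inE /= !H => /orP [] /eqP ->.
case E: (nth None s j) => [[c b']|] // _.
have ck : c < k.
  have := allP A _ (mem_nth None (_ : (j : nat) < size s)); rewrite E; apply.
  by rewrite sz.
exists (Ordinal ck) => //; rewrite !inE /= !H E /=.
by case: b b' {E} => -[]; rewrite ?eqxx ?orbT.
Qed.

Lemma G_SSP (H : rel P s) (sz : size s = n) (A : all (bnd k) s) T :
  is_SSP T P <-> T = Tset s /\ Vsem k s.
Proof.
have Hnth : forall i, fo s i < size s -> isb i (nth None s (fo s i)).
  by move=> i Hf; apply: nth_find; rewrite has_find.
split.
- case/and5P => /forallP A1 _ _ /eqP A4 /forallP A5.
  have B : forall i, i < k -> fo s i < size s.
    by move=> i ik; rewrite -(G_nonempty H sz (Ordinal ik)); exact: A1.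
  split.
    apply/setP => j; move/setP: A4 => /(_ ((j, true) : sgnel n)).
    by rewrite G_U // !inE /= => <-.
  split => // i ik.
  have ik' : i < k by apply: ltnW.
  have := forallP (A5 (Ordinal ik')) (Ordinal ik); rewrite /= leqnSn /=.
  rewrite !(G_minabs H sz) ?B // ltnS leq_eqVlt => /orP [/eqP E|//].
  have := Hnth _ (B _ ik'); have := Hnth _ (B _ ik); rewrite E.
  case: (nth None s (fo s i.+1)) => [[c b]|] //= /eqP -> /eqP ci.
  by have := ltnSn i; rewrite {2}ci ltnn.
- case=> -> [_ B C]; apply/and5P; split.
  + apply/forallP => i; rewrite G_nonempty //; exact: B.
  + apply/forallP => i; apply/forallP => j; apply/implyP => ne.
    rewrite disjoint_subset; apply/subsetP => -[j0 b]; rewrite !inE !H => /eqP ->.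
    by apply/eqP => -[/val_inj E]; rewrite E eqxx in ne.
  + apply/forallP => i; apply/forallP => j.
    rewrite disjoint_subset; apply/subsetP => -[j0 b]; rewrite !inE !H => /eqP ->.
    by apply/eqP => -[_]; case: b.
  + by apply/eqP/setP => x; rewrite G_U // !inE.
  + apply/forallP => i; apply/forallP => j; apply/implyP.
    rewrite !(G_minabs H sz) ?B // ltnS leq_eqVlt => /orP [/eqP E|ij].
      by rewrite (val_inj E).
    by apply: ltnW; apply: (@fo_mono k s C) => //.
Qed.

Lemma G_PSSP (H : rel P s) (sz : size s = n) (A : all (bnd k) s) :
  is_PSSP P <-> Vsem k s.
Proof.
split.
  by case/existsP => T /(G_SSP H sz A) [].
by move=> V; apply/existsP; exists (Tset s); apply/(G_SSP H sz A).
Qed.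

Lemma cnt_card (sz : size s = n) : count_mem None s = #|~: Tset s|.
Proof.
rewrite -sum1_count (big_nth None) sz big_mkord -sum1_card.
by apply: eq_bigl => j; rewrite !inE negbK.
Qed.

Lemma G_Dsub (H : rel P s) (sz : size s = n) (A : all (bnd k) s) :
  is_Dsub P <-> Vsem k s /\ count_mem None s != 1.
Proof.
rewrite /is_Dsub.
have E : [exists i : 'I_n, is_SSP (setT :\ i) P] = is_PSSP P && (count_mem None s == 1).
  apply/existsP/andP => [[i /(G_SSP H sz A) [E V]]|[V]].
    split; first by apply/(G_PSSP H sz A).
    rewrite cnt_card // -E setCD setCT set0U; apply/cards1P; by exists i.
  rewrite cnt_card // => /cards1P [i Ei].
  exists i; apply/(G_SSP H sz A); split; last exact/(G_PSSP H sz A).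
  by rewrite setTD -Ei setCK.
rewrite E; case: (is_PSSP P) (G_PSSP H sz A) => /= V.
  by split => [C1|[_ C1]] //; split => //; exact/V.
by split => // -[/V].
Qed.

Lemma sum_pairs (sz : size s = n) (F : code -> bool -> nat) :
  \sum_(x : sgnel n) F (nth None s x.1) x.2 = \sum_(y <- s) (F y true + F y false).
Proof.
rewrite (big_nth None) sz big_mkord.
rewrite -(pair_bigA _ (fun (j : 'I_n) (b : bool) => F (nth None s j) b)) /=.
by apply: eq_bigr => j _; rewrite big_bool.
Qed.

Lemma G_mstat (H : rel P s) (sz : size s = n) (A : all (bnd k) s) :
  mstat P = wexp s.
Proof.
pose hh (y : code) := if y is Some (c, _) then c.+1 else 0.
pose pp (y : code) := if y is Some (_, true) then 1 else 0.
have cardP : forall i : 'I_k, #|P i| =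
    \sum_(y <- s) ((y == Some (val i, true)) + (y == Some (val i, false))).
  move=> i; rewrite -sum1_card big_mkcond /=.
  rewrite -(sum_pairs sz (fun y b => nat_of_bool (y == Some (val i, b)))).
  by apply: eq_bigr => -[j b] _; rewrite H; case: eqP.
have C1 : \sum_(i < k) i.+1 * #|P i| = \sum_(y <- s) hh y.
  have C1' : forall i : 'I_k, i.+1 * #|P i| = \sum_(y <- s)
      i.+1 * ((y == Some (val i, true)) + (y == Some (val i, false))).
    by move=> i; rewrite cardP big_distrr.
  rewrite (eq_bigr _ (fun i _ => C1' i)).
  rewrite exchange_big /=; apply: eq_big_seq => y ys.
  have := allP A y ys; case: y ys => [[c b]|] ys /= ck.
    rewrite (bigD1 (Ordinal ck)) //= big1 ?addn0.
      by rewrite !eq_Some eqxx /=; case: (b); rewrite /= muln1.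
    move=> i /eqP ne; rewrite !eq_Some.
    have -> : (c == i) = false by apply/eqP => E; apply: ne; apply: val_inj; rewrite /= E.
    by rewrite /= muln0.
  by apply: big1 => i _; rewrite muln0.
have C2 : pos P = \sum_(y <- s) pp y.
  pose FF (y : code) (b : bool) :=
    nat_of_bool ((if y is Some (_, b') then b' == b else false) && b).
  rewrite /pos -sum1_card big_mkcond /=.
  rewrite (eq_bigr (fun x : sgnel n => FF (nth None s x.1) x.2)); last first.
    move=> -[j b] _; rewrite inE /=.
    have -> : ((j, b) \in \bigcup_i P i) =
              (if nth None s j is Some (_, b') then b' == b else false).
      apply/bigcupP/idP => [[i _]|].
        by rewrite H => /eqP ->.
      case E: (nth None s j) => [[c b']|] // /eqP <-.
      have ck : c < k.
        have := allP A _ (mem_nth None (_ : (j : nat) < size s)); rewrite E; apply.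
        by rewrite sz.
      by exists (Ordinal ck) => //; rewrite H E.
    by rewrite /FF; case: (nth None s j) => [[c b']|] //; case: (_ && _).
  rewrite sum_pairs //; apply: eq_bigr => -[[c b]|] _ //=; by case: b.
rewrite /mstat C1 C2 /wexp big_distrr /=.
have -> : \sum_(y <- s) 2 * hh y = \sum_(y <- s) ey y + \sum_(y <- s) pp y.
  rewrite -big_split /=; apply: eq_bigr => -[[c [|]]|] _ //=.
    lia.
  lia.
by rewrite addnK.
Qed.

End G.

Lemma sum_Dsub (R : Type) (idx : R) (op : Monoid.com_law idx) (F : PT -> R) :
  k <= n ->
  \big[op/idx]_(P : PT | is_Dsub P) F P =
  \big[op/idx]_(s <- allseq n n | (st s == Some k) && (count_mem None s != 1)) F (toP s).
Proof.
move=> kn.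
set C := fun s => (st s == Some k) && (count_mem None s != 1).
have HC : forall s, s \in allseq n n -> C s ->
    [/\ size s = n, all (bnd k) s & is_Dsub (toP s)].
  move=> s; rewrite mem_allseq => /andP [/eqP sz _] /andP [/eqP /st_V V c1].
  have A : all (bnd k) s by case: V.
  split => //; apply/(@G_Dsub _ _ (rel_toP s) sz A); by split.
rewrite -[RHS]big_filter -(big_map toP (fun _ => true) F) -[LHS]big_filter.
apply: perm_big; apply: uniq_perm.
- by apply: filter_uniq; exact: index_enum_uniq.
- rewrite map_inj_in_uniq ?filter_uniq ?uniq_allseq //.
  move=> s1 s2; rewrite !mem_filter => /andP [c1 i1] /andP [c2 i2] E.
  have [sz1 A1 _] := HC _ i1 c1; have [sz2 A2 _] := HC _ i2 c2.
  by rewrite -(@dec_rel _ _ (rel_toP s1) sz1 A1) -(@dec_rel _ _ (rel_toP s2) sz2 A2) E.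
- move=> P; rewrite mem_filter mem_index_enum andbT.
  apply/idP/mapP => [D|[s]].
    have Hr := @PSSP_rel _ (proj1 (andP D)).
    have [V c1] := (@G_Dsub _ _ Hr (size_dec P) (bnd_dec P)).1 D.
    exists (dec P); last exact: (@rel_uniq _ _ _ Hr (rel_toP _)).
    rewrite mem_filter mem_allseq size_dec eqxx /=.
    apply/andP; split; first by rewrite /C c1 andbT; apply/eqP/st_V.
    apply: sub_all (bnd_dec P) => -[[c b]|] //= ck; exact: leq_trans ck kn.
  by rewrite mem_filter => /andP [c i] ->; have [] := HC _ i c.
Qed.

End Bij.

Section RingPart.
Local Open Scope ring_scope.

Section Sums.
Variables (R : fieldType) (q t : R) (n : nat).
Hypothesis hq : q != 0.
Hypothesis h2 : qint q 2 != 0.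

Definition norm (k : nat) : R := q ^+ (k * k) * qint q 2 ^+ k.
Definition W (s : seq code) : R := q ^+ wexp s.
Definition cg (g : nat -> R) (s : seq code) : R :=
  if st s is Some k then W s / norm k * g k else 0.
Definition Sm (g : nat -> R) (Q : pred nat) (m : nat) : R :=
  \sum_(s <- allseq n m | Q (count_mem None s)) cg g s.
Definition gp (g : nat -> R) (k : nat) : R := (qint q (2 * k).+1 - 1) * g k + g k.+1.

Lemma st_rcons (s : seq code) (x : code) : st (rcons s x) = stp (st s) x.
Proof. by rewrite /st foldl_rcons. Qed.

Lemma wexp_rcons (s : seq code) (x : code) : wexp (rcons s x) = (wexp s + ey x)%N.
Proof. by rewrite /wexp -cats1 big_cat big_seq1. Qed.

Lemma cnt_rcons (s : seq code) (x : code) : count_mem None (rcons s x) = (count_mem None s + (x == None))%N.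
Proof. by rewrite -cats1 count_cat /= addn0. Qed.

Lemma cg_None g s : cg g (rcons s None) = cg g s.
Proof.
rewrite /cg st_rcons; case: (st s) => // k.
by rewrite /W wexp_rcons addn0.
Qed.

Lemma norm_nz k : norm k != 0.
Proof. by rewrite /norm mulf_neq0 // expf_neq0. Qed.

Lemma norm_S k : norm k.+1 = norm k * (q ^+ (2 * k).+1 * qint q 2).
Proof.
rewrite /norm [qint q 2 ^+ k.+1]exprS.
have -> : (k.+1 * k.+1 = k * k + (2 * k).+1)%N by lia.
by rewrite exprD; ring.
Qed.

Lemma qint2 : qint q 2 = 1 + q.
Proof. by rewrite /qint big_ord_recr big_ord1 /= expr0 expr1. Qed.

Lemma qint_S m : qint q m.+1 = qint q m + q ^+ m.
Proof. by rewrite /qint big_ord_recr. Qed.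

Lemma qodd k : \sum_(0 <= b < k) (q ^+ (2 * b).+1 + q ^+ ((2 * b).+1 + 1)) =
  qint q (2 * k).+1 - 1.
Proof.
elim: k => [|k IH].
  by rewrite big_nil /qint big_ord1 expr0 subrr.
rewrite big_nat_recr //= IH.
have -> : (2 * k.+1).+1 = ((2 * k).+1).+1.+1 by lia.
rewrite !qint_S; have -> : ((2 * k).+1 + 1 = ((2 * k).+1).+1)%N by lia.
ring.
Qed.

Lemma cg_pair g s k b : st s = Some k ->
  cg g (rcons s (Some (b, true))) + cg g (rcons s (Some (b, false))) =
  if (b < k)%N then W s / norm k * g k * (q ^+ (2 * b).+1 + q ^+ ((2 * b).+1 + 1))
  else if b == k then W s / norm k * g k.+1 else 0.
Proof.
move=> Hs; rewrite /cg !st_rcons Hs /= /W !wexp_rcons /= !exprD.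
case: ifP => bk; first by rewrite expr0 expr1; ring.
case: eqP => [->|_]; last by rewrite addr0.
rewrite norm_S expr0 qint2 expr1.
have nk := norm_nz k.
have qo : q ^+ (2 * k).+1 != 0 by rewrite expf_neq0.
have q1 : 1 + q != 0 by rewrite -qint2.
field; rewrite ?nk ?qo ?q1 //.
Qed.

Lemma cg_ext g s k : st s = Some k -> (k < n)%N ->
  \sum_(b <- iota 0 n) (cg g (rcons s (Some (b, true))) + cg g (rcons s (Some (b, false))))
  = cg (gp g) s.
Proof.
move=> Hs kn.
rewrite (eq_bigr _ (fun b _ => @cg_pair g s k b Hs)).
have -> : iota 0 n = index_iota 0 n by rewrite /index_iota subn0.
rewrite (big_cat_nat (leq0n k) (ltnW kn)) /= (big_ltn kn) /= ltnn eqxx.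
rewrite big_nat_cond (eq_bigr (fun b => W s / norm k * g k *
    (q ^+ (2 * b).+1 + q ^+ ((2 * b).+1 + 1)))); last first.
  by move=> b /andP [/andP [_ ->] _].
rewrite -big_nat_cond -mulr_sumr qodd.
rewrite big_nat_cond big1; last first.
  move=> b /andP [/andP [kb _] _]; rewrite ltnNge ltnW //=.
  by rewrite gtn_eqF.
rewrite /cg Hs /gp addr0; ring.
Qed.

Lemma cg_ext' g s : (forall k, st s = Some k -> (k < n)%N) ->
  \sum_(b <- iota 0 n) (cg g (rcons s (Some (b, true))) + cg g (rcons s (Some (b, false))))
  = cg (gp g) s.
Proof.
case E: (st s) => [k|] H; first by apply: cg_ext E (H _ erefl).
rewrite [RHS]/cg E big1 // => b _.
by rewrite /cg !st_rcons E /= addr0.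
Qed.

Lemma allseq_st m s k : s \in allseq n m -> st s = Some k -> (k <= m)%N.
Proof.
rewrite mem_allseq => /andP [/eqP <- _] /st_bound.
exact: leq_trans (leq_addr _ _).
Qed.

Lemma Sm_step g (Q : pred nat) m : (m < n)%N ->
  Sm g Q m.+1 = Sm g (fun c => Q c.+1) m + Sm (gp g) Q m.
Proof.
move=> mn; rewrite /Sm big_mkcond [X in _ = X + _]big_mkcond [X in _ = _ + X]big_mkcond -big_split.
change (allseq n m.+1) with [seq rcons s x | s <- allseq n m, x <- alph n].
rewrite big_allpairs_dep /=; apply: eq_big_seq => s sin.
rewrite /alph big_cons cnt_rcons eqxx addn1 cg_None; congr (_ + _).
rewrite big_flatten big_map /=.
under eq_bigr do rewrite !big_cons big_nil !cnt_rcons /= !addn0.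
case: ifP => Qs.
  rewrite -(cg_ext' g s); first by apply: eq_bigr => b _; rewrite addr0.
  by move=> k /(allseq_st _ _ _ sin) km; exact: leq_ltn_trans km mn.
by rewrite big1 // => b _; rewrite !addr0.
Qed.

Lemma Sm0 g Q : Sm g Q 0 = if Q 0%N then g 0%N else 0.
Proof.
rewrite /Sm /= big_cons big_nil /= addr0.
by rewrite /cg /= /W /wexp big_nil /norm !expr0 mulr1 invr1 !mul1r.
Qed.

Lemma Sm_ext g h Q m : (forall k, (k <= m)%N -> g k = h k) -> Sm g Q m = Sm h Q m.
Proof.
move=> H; rewrite /Sm big_mkcond [RHS]big_mkcond; apply: eq_big_seq => s sin.
case: (Q _) => //; rewrite /cg; case E: (st s) => [k|] //.
by rewrite H // (allseq_st _ _ _ sin E).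
Qed.

Lemma Sm_scale c g Q m : Sm (fun k => c * g k) Q m = c * Sm g Q m.
Proof.
rewrite /Sm mulr_sumr; apply: eq_bigr => s _; rewrite /cg.
by case: (st s) => [k|]; rewrite ?mulr0 // mulrCA.
Qed.

Lemma Sm_eqQ g (Q Q' : pred nat) m : Q =1 Q' -> Sm g Q m = Sm g Q' m.
Proof. by move=> H; rewrite /Sm; apply: eq_bigl => s; rewrite H. Qed.

Lemma Sm_Q0 g (Q : pred nat) m : (forall c, Q c = false) -> Sm g Q m = 0.
Proof. by move=> H; rewrite /Sm big_mkcond big1 // => s _; rewrite H. Qed.

Lemma Sm_split g m : Sm g predT m = Sm g (pred1 1%N) m + Sm g (fun c => c != 1%N) m.
Proof. by rewrite /Sm (bigID (fun s => count_mem None s == 1%N)). Qed.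

Definition f (k : nat) : R := \prod_(i < k) (t - qint q (2 * i).+1).

Lemma gp_f k : gp f k = (t - 1) * f k.
Proof. rewrite /gp /f big_ord_recr /=; ring. Qed.

Lemma R_all m : (m <= n)%N -> Sm f predT m = t ^+ m.
Proof.
elim: m => [|m IH] mn; first by rewrite Sm0 /f big_ord0 expr0.
rewrite Sm_step // (@Sm_eqQ _ _ predT _) // (IH (ltnW mn)).
rewrite (@Sm_ext _ (fun k => (t - 1) * f k)); last by move=> k _; exact: gp_f.
rewrite Sm_scale (IH (ltnW mn)) exprS; ring.
Qed.

Lemma R_0 m : (m <= n)%N -> Sm f (pred1 0%N) m = (t - 1) ^+ m.
Proof.
elim: m => [|m IH] mn; first by rewrite Sm0 /f big_ord0 expr0.
rewrite Sm_step // Sm_Q0 // add0r.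
rewrite (@Sm_ext _ (fun k => (t - 1) * f k)); last by move=> k _; exact: gp_f.
by rewrite Sm_scale (IH (ltnW mn)) exprS.
Qed.

Lemma R_1 m : (m <= n)%N -> Sm f (pred1 1%N) m = m%:R * (t - 1) ^+ m.-1.
Proof.
elim: m => [|m IH] mn; first by rewrite Sm0 /= mul0r.
rewrite Sm_step // (@Sm_eqQ _ _ (pred1 0%N) _); last by move=> c /=; rewrite eqSS.
rewrite (R_0 _ (ltnW mn)).
rewrite (@Sm_ext _ (fun k => (t - 1) * f k)); last by move=> k _; exact: gp_f.
rewrite Sm_scale (IH (ltnW mn)).
case: m {IH mn} => [|m] /=; first by rewrite mul0r mulr0 addr0 mul1r expr0.
rewrite exprS -[m.+2]addn1 natrD -[m.+1]addn1 natrD; ring.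
Qed.

Lemma R_T m : (m <= n)%N -> Sm (fun k => (k == m)%:R) predT m = 1.
Proof.
elim: m => [|m IH] mn; first by rewrite Sm0.
rewrite Sm_step //.
rewrite (@Sm_ext _ (fun k => 0 * (k == m)%:R)); last first.
  by move=> k km; rewrite mul0r ltn_eqF // ltnS.
rewrite Sm_scale mul0r add0r.
rewrite (@Sm_ext _ (fun k => (k == m)%:R)); last first.
  by move=> k km; rewrite /gp ltn_eqF ?ltnS // mulr0 add0r eqSS.
exact: IH (ltnW mn).
Qed.

Lemma Sm_conv g Q : Sm g Q n = \sum_(k < n.+1)
  ((norm k)^-1 * \sum_(s <- allseq n n | (st s == Some (k : nat)) && Q (count_mem None s)) W s) * g k.
Proof.
have per : {in allseq n n, forall s, cg g s =
    \sum_(k < n.+1) (if st s == Some (k : nat) then W s / norm k * g k else 0)}.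
  move=> s sin; rewrite /cg; case E: (st s) => [k0|].
    have k0n : (k0 < n.+1)%N by rewrite ltnS (allseq_st _ _ _ sin E).
    rewrite (bigD1 (Ordinal k0n)) //= eqxx big1 ?addr0 // => k ne.
    case: eqP => // -[] E'; case/eqP: ne; exact: val_inj.
  by rewrite big1.
rewrite /Sm; transitivity (\sum_(s <- allseq n n | Q (count_mem None s))
   \sum_(k < n.+1) (if st s == Some (k : nat) then W s / norm k * g k else 0)).
  rewrite big_seq_cond [RHS]big_seq_cond; apply: eq_bigr => s /andP [sin _].
  exact: per.
rewrite exchange_big /=; apply: eq_bigr => k _.
rewrite mulr_sumr mulr_suml big_mkcond [RHS]big_mkcond; apply: eq_bigr => s _.
case: (Q _); case: (st s == Some (k : nat)) => //=; rewrite ?mul0r //; ring.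
Qed.

End Sums.

End RingPart.

Local Open Scope ring_scope.
Arguments norm {R}. Arguments W {R}. Arguments Sm {R}. Arguments f {R}. Arguments cg {R}.
Arguments Sm_conv {R}. Arguments Sm_split {R}.
Arguments R_all {R q t n}. Arguments R_1 {R q t n}. Arguments R_T {R q n}.

Lemma SD_eq (R : fieldType) (q : R) n k : (k <= n)%N ->
  SD n k q = (norm q k)^-1 *
    \sum_(s <- allseq n n | (st s == Some k) && (count_mem None s != 1%N)) W q s.
Proof.
move=> kn; rewrite /SD -/(norm q k); congr (_ * _).
rewrite (@sum_Dsub n k _ _ _ (fun P => q ^+ mstat P) kn).
rewrite big_seq_cond [RHS]big_seq_cond; apply: eq_bigr => s /andP [sin /andP [/eqP /st_V V _]].
move: sin; rewrite mem_allseq => /andP [/eqP sz _].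
by rewrite /W (@G_mstat n k _ _ (rel_toP n k s) sz) //; case: V.
Qed.

Lemma qint_add (R : fieldType) (q : R) a b : qint q (a + b) = qint q a + q ^+ a * qint q b.
Proof.
rewrite /qint big_split_ord /= mulr_sumr; congr (_ + _).
by apply: eq_bigr => i _; rewrite exprD.
Qed.

Theorem proposition3p4 (R : numClosedFieldType) (q t : R) (n : nat) :
  q != 0 -> qint q 2 != 0 ->
  t ^+ n =
    \sum_(k < n.+1) SD n k q * fallD n k q t
    + n%:R * (t - 1) ^+ n.-1
    - qint q n * q ^+ n.-1 * fallD n n.-1 q t.
Proof.
move=> hq h2.
pose A (k : nat) := (norm q k)^-1 *
    \sum_(s <- allseq n n | (st s == Some k) && (count_mem None s != 1%N)) W q s.
have HSD : forall k : 'I_n.+1, SD n k q = A k.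
  by move=> k; rewrite SD_eq // -ltnS.
have F1 : \sum_(k < n.+1) A k * f q t k = t ^+ n - n%:R * (t - 1) ^+ n.-1.
  have := Sm_conv q n (f q t) (fun c => c != 1%N).
  rewrite /= => <-.
  rewrite -(R_all hq h2 _ (leqnn n)) -(R_1 hq h2 _ (leqnn n)) (Sm_split q n (f q t) n).
  ring.
have F2 : A n = 1.
  have := Sm_conv q n (fun k => (k == n)%:R) (fun c => c != 1%N).
  rewrite /= big_ord_recr /= eqxx mulr1 big1 ?add0r; last first.
    by move=> i _; rewrite ltn_eqF // mulr0.
  rewrite /A => <-.
  have Z : Sm q n (fun k => (k == n)%:R) (pred1 1%N) n = 0.
    rewrite /Sm big_seq_cond big1 // => s /andP [sin /eqP c1].
    rewrite /cg; case E: (st s) => [k|] //.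
    move: sin; rewrite mem_allseq => /andP [/eqP sz _].
    have := st_bound _ _ E; rewrite c1 sz addn1 => kn.
    by rewrite ltn_eqF // mulr0.
  have := Sm_split q n (fun k => (k == n)%:R) n.
  rewrite (R_T hq h2 _ (leqnn n)) Z add0r => <- //.
have fD : forall k, (k < n)%N -> fallD n k q t = f q t k.
  move=> k kn; rewrite /fallD kn; case: eqP => [->|//].
  by rewrite /f big_ord0.
rewrite (eq_bigr (fun k : 'I_n.+1 => A k * fallD n k q t)); last by move=> k _; rewrite HSD.
case: n hq h2 A HSD F1 F2 fD => [|m] hq h2 A HSD F1 F2 fD.
  rewrite big_ord_recr big_ord0 /= F2 /fallD /= /qint big_ord0 expr0; ring.
rewrite big_ord_recr /= F2 mul1r.
rewrite (eq_bigr (fun k : 'I_m.+1 => A k * f q t k)); last first.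
  by move=> k _; rewrite fD.
move: F1; rewrite big_ord_recr /= F2 mul1r => F1.
have -> : \sum_(i < m.+1) A i * f q t i = t ^+ m.+1 - m.+1%:R * (t - 1) ^+ m - f q t m.+1.
  by rewrite -F1 /=; ring.
rewrite (fD m (ltnSn m)) /fallD /= ltnn /=.
rewrite /f big_ord_recr /=.
have -> : qint q (2 * m).+1 = qint q m + q ^+ m * qint q m.+1.
  by rewrite -qint_add; congr qint; lia.
ring.
Qed.
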